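(* Let $a$ be a polynomial of degree $n$ with $\int_0^1 a(x)\,dx=0$, so that $(a,0)\in\mathcal U_{n/n+1}$. Then the Zariski tangent space $T_{(a,0)}\mathcal U_{n/n+1}$ is a vector space of dimension $n+1$, consisting of the pairs of polynomials $(p,q)$ of degree at most $n$ such that $q$ and $a$ are co-linear (i.e. $q\in\mathbb C\cdot a$) and $\int_0^1 p(x)\,dx=0$.
   Context: Work over $\mathbb C$. Let $\mathcal A_n\cong\mathbb C^{2n+2}$ be the vector space of pairs $(a,b)$ of polynomials of degree at most $n$ (identified with Abel equations $\frac{dy}{dx}=a(x)y^2+b(x)y^3$). The set $\mathcal U_{n/n+1}\subset\mathcal A_n$ is the set of pairs $(a,b)$ with $\deg a,\deg b\leq n$, $\int_0^1 a(x)dx=\int_0^1 b(x)dx=0$, and $a,b$ co-linear polynomials (linearly dependent over $\mathbb C$). *)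

(* Defs.v *)
From HB Require Import structures.
From mathcomp Require Import all_boot all_order all_algebra.
From mathcomp Require Import mpoly.
Set Implicit Arguments. Unset Strict Implicit. Unset Printing Implicit Defensive.
Import Order.TTheory GRing.Theory Num.Theory.
Local Open Scope ring_scope.

Section Defs.
Variable C : numClosedFieldType.

Definition ambdim (n : nat) : nat := (n.+1 + n.+1)%N.

(* integral over [0,1] of a polynomial: \int_0^1 x^i dx = 1/(i+1) *)
Definition int01 (p : {poly C}) : C :=
  \sum_(i < size p) p`_i / (i.+1)%:R.

Definition colinear (p q : {poly C}) : Prop :=
  exists l m : C, (l != 0 \/ m != 0) /\ l *: p + m *: q = 0.

(* the polynomials a, b encoded by a point of C^(2n+2):
   coordinates 0..n are the coefficients of a, n+1..2n+1 those of b *)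
Definition polyA (n : nat) (v : 'rV[C]_(ambdim n)) : {poly C} :=
  \poly_(i < n.+1) v 0 (lshift n.+1 (inord i : 'I_n.+1)).
Definition polyB (n : nat) (v : 'rV[C]_(ambdim n)) : {poly C} :=
  \poly_(i < n.+1) v 0 (rshift n.+1 (inord i : 'I_n.+1)).

Definition coords (n : nat) (p q : {poly C}) : 'rV[C]_(ambdim n) :=
  \row_(i < ambdim n) match split i with inl j => p`_j | inr j => q`_j end.

Definition inU (n : nat) (v : 'rV[C]_(ambdim n)) : Prop :=
  [/\ int01 (polyA v) = 0, int01 (polyB v) = 0 & colinear (polyA v) (polyB v)].

Definition evalpt (k : nat) (f : {mpoly C[k]}) (v : 'rV[C]_k) : C :=
  f.@[fun i => v 0 i].

Definition vanishing_ideal (k : nat) (S : 'rV[C]_k -> Prop) (f : {mpoly C[k]}) : Prop :=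
  forall v, S v -> evalpt f v = 0.

Definition zariski_tangent (k : nat) (S : 'rV[C]_k -> Prop) (x w : 'rV[C]_k) : Prop :=
  forall f : {mpoly C[k]}, vanishing_ideal S f ->
    \sum_(i < k) evalpt (mderiv i f) x * w 0 i = 0.

End Defs.

(* Main.v *)
Require Import Defs.
From HB Require Import structures.
From mathcomp Require Import all_boot all_order all_algebra.
From mathcomp Require Import mpoly.
From mathcomp Require Import ring.
Set Implicit Arguments. Unset Strict Implicit. Unset Printing Implicit Defensive.
Import Order.TTheory GRing.Theory Num.Theory.
Local Open Scope ring_scope.

Lemma splitL m n (i : 'I_m) : split (lshift n i) = inl i.
Proof. exact: (unsplitK (inl i)). Qed.
Lemma splitR m n (i : 'I_n) : split (rshift m i) = inr i.
Proof. exact: (unsplitK (inr i)). Qed.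

Section Deriv.
Variable C : numClosedFieldType.
Variable k : nat.
Variables x w u : 'I_k -> C.

Definition Ed (f : {mpoly C[k]}) := \sum_(i < k) (mderiv i f).@[x] * w i.
Definition hc i : {poly C} := (x i)%:P + (w i)%:P * 'X + (u i)%:P * 'X^2.
Definition Phi (f : {mpoly C[k]}) : {poly C} := mmap (@polyC C) hc f.

Lemma Phi_horner f t : (Phi f).[t] = f.@[fun i => x i + w i * t + u i * t ^+ 2].
Proof.
rewrite /Phi /mmap mevalE horner_sum; apply: eq_bigr => m _.
rewrite hornerM hornerC /mmap1 horner_prod; congr (_ * _); apply: eq_bigr => i _.
by rewrite horner_exp /hc !hornerE.
Qed.

Lemma Phi0 f : (Phi f)`_0 = f.@[x].
Proof.
rewrite -horner_coef0 Phi_horner; apply: meval_eq => i.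
by rewrite expr0n /= !mulr0 !addr0.
Qed.

Lemma PhiD f g : Phi (f + g) = Phi f + Phi g.
Proof. exact: mmapD. Qed.
Lemma PhiZ c f : Phi (c *: f) = c%:P * Phi f.
Proof. exact: mmapZ. Qed.
Lemma PhiM f g : Phi (f * g) = Phi f * Phi g.
Proof. exact: rmorphM. Qed.
Lemma Phi1 : Phi 1 = 1.
Proof. exact: rmorph1. Qed.
Lemma PhiX i : Phi 'X_i = hc i.
Proof. by rewrite /Phi mmapX mmap1U. Qed.

Lemma EdD f g : Ed (f + g) = Ed f + Ed g.
Proof. by rewrite /Ed -big_split; apply: eq_bigr => i _; rewrite mderivD mevalD mulrDl. Qed.
Lemma EdZ c f : Ed (c *: f) = c * Ed f.
Proof. by rewrite /Ed mulr_sumr; apply: eq_bigr => i _; rewrite mderivZ mevalZ mulrA. Qed.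
Lemma EdM f g : Ed (f * g) = Ed f * g.@[x] + f.@[x] * Ed g.
Proof.
rewrite /Ed mulr_suml mulr_sumr -big_split; apply: eq_bigr => i _.
rewrite mderivM mevalD !mevalM mulrDl /=; congr (_ + _); [exact: mulrAC | exact: esym (mulrA _ _ _)].
Qed.
Lemma Ed1 : Ed 1 = 0.
Proof. by rewrite /Ed big1 // => i _; rewrite -mpolyC1 mderivC meval0 mul0r. Qed.
Lemma EdX i : Ed 'X_i = w i.
Proof.
rewrite /Ed (bigD1 i) //= big1 ?addr0.
  rewrite mderivX mnm1E eqxx.
  have ->: mnm_sub U_(i) U_(i) = 0%MM by apply/mnmP => j; rewrite mnmBE subnn mnm0E.
  by rewrite  mpolyX0 scale1r meval1 mul1r.
by move=> j /negbTE hj; rewrite mderivX mnm1E eq_sym hj scale0r meval0 mul0r.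
Qed.

Lemma Ed0 : Ed 0 = 0.
Proof. by rewrite /Ed big1 // => i _; rewrite mderiv0 meval0 mul0r. Qed.
Lemma EdB f g : Ed (f - g) = Ed f - Ed g.
Proof. by rewrite /Ed -sumrB; apply: eq_bigr => i _; rewrite mderivB mevalB mulrBl. Qed.

Definition Dd f := (Phi f)`_1.
Lemma DdM f g : Dd (f * g) = Dd f * g.@[x] + f.@[x] * Dd g.
Proof.
rewrite /Dd PhiM coefM big_ord_recr big_ord_recr big_ord0 /= add0r.
rewrite -!Phi0 subnn subn0; ring.
Qed.

Lemma Dd_Ed f : Dd f = Ed f.
Proof.
elim/mpolyind: f => [|c m p _ _ IH].
  by rewrite /Dd /Ed /Phi mmap0 coef0 big1 // => i _; rewrite mderiv0 meval0 mul0r.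
rewrite EdD EdZ /Dd PhiD PhiZ coefD coefCM -/(Dd p) IH; congr (_ * _ + _).
rewrite mpolyXE_id; apply: (big_ind (fun f => Dd f = Ed f)).
- by rewrite Ed1 /Dd Phi1 coef1.
- by move=> f g Hf Hg; rewrite DdM EdM Hf Hg.
move=> i _.
elim: (m i) => [|e IHe]; first by rewrite expr0 Ed1 /Dd Phi1 coef1.
rewrite exprS DdM EdM IHe; congr (_ + _).
by rewrite EdX /Dd PhiX /hc !coefD coefC coefCM coefX coefCM coefXn /= !(mulr0, mulr1, add0r, addr0).
Qed.
End Deriv.
Lemma poly_all0 (C : numClosedFieldType) (P : {poly C}) : (forall t, P.[t] = 0) -> P = 0.
Proof.
move=> H; apply/eqP; apply/negPn/negP => nz.
have inj : injective (fun i : nat => (i%:R : C)).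
  by move=> m n' E; apply/eqP; rewrite -(eqr_nat C) E.
pose rs := [seq (i%:R : C) | i <- iota 0 (size P)].
have h1 : all (root P) rs by apply/allP => t _; apply/rootP.
have h2 : uniq rs by rewrite (map_inj_uniq inj) iota_uniq.
by have := max_poly_roots nz h1 h2; rewrite size_map size_iota ltnn.
Qed.

Section Basics.
Variable C : numClosedFieldType.
Variable n : nat.
Implicit Types (v w : 'rV[C]_(ambdim n)) (p q : {poly C}).

Definition vA v (k : 'I_n.+1) := v 0 (lshift n.+1 k).
Definition vB v (k : 'I_n.+1) := v 0 (rshift n.+1 k).
Definition IA v := \sum_(k < n.+1) vA v k / (k.+1)%:R.
Definition IB v := \sum_(k < n.+1) vB v k / (k.+1)%:R.

Lemma coordsA p q k : vA (coords n p q) k = p`_k.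
Proof. by rewrite /vA mxE splitL. Qed.
Lemma coordsB p q k : vB (coords n p q) k = q`_k.
Proof. by rewrite /vB mxE splitR. Qed.

Lemma int01E p N : (size p <= N)%N -> int01 p = \sum_(i < N) p`_i / (i.+1)%:R.
Proof.
move=> hN; rewrite /int01 -(big_mkord xpredT (fun i => p`_i / (i.+1)%:R)).
rewrite -(big_mkord xpredT (fun i => p`_i / (i.+1)%:R)).
rewrite (big_cat_nat (leq0n _) hN) /= [X in _ + X]big1_seq ?addr0 //.
move=> i /andP [_]; rewrite mem_index_iota => /andP [hi _].
by rewrite nth_default // mul0r.
Qed.

Lemma coefA v (k : 'I_n.+1) : (polyA v)`_k = vA v k.
Proof. by rewrite coef_poly ltn_ord inord_val. Qed.
Lemma coefB v (k : 'I_n.+1) : (polyB v)`_k = vB v k.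
Proof. by rewrite coef_poly ltn_ord inord_val. Qed.

Lemma int01A v : int01 (polyA v) = IA v.
Proof. by rewrite (int01E (size_poly _ _)); apply: eq_bigr => k _; rewrite coefA. Qed.
Lemma int01B v : int01 (polyB v) = IB v.
Proof. by rewrite (int01E (size_poly _ _)); apply: eq_bigr => k _; rewrite coefB. Qed.

Lemma polyB_scale v s : (forall k, vB v k = s * vA v k) -> polyB v = s *: polyA v.
Proof.
move=> H; apply/polyP => j; rewrite coefZ !coef_poly; case: ifP => hj; last by rewrite mulr0.
exact: H.
Qed.

Lemma polyA_coords p q : (size p <= n.+1)%N -> polyA (coords n p q) = p.
Proof.
move=> hp; apply/polyP => j; rewrite coef_poly; case: ltnP => hj.
  by rewrite -/(vA _ _) coordsA inordK.
by rewrite nth_default // (leq_trans hp hj).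
Qed.
Lemma polyB_coords p q : (size q <= n.+1)%N -> polyB (coords n p q) = q.
Proof.
move=> hp; apply/polyP => j; rewrite coef_poly; case: ltnP => hj.
  by rewrite -/(vB _ _) coordsB inordK.
by rewrite nth_default // (leq_trans hp hj).
Qed.

Lemma int01_0 : int01 (0 : {poly C}) = 0.
Proof. by rewrite /int01 size_poly0 big_ord0. Qed.

Lemma coords_polyAB v : coords n (polyA v) (polyB v) = v.
Proof.
apply/rowP => j; rewrite mxE -(splitK j); case: (split j) => k /=.
  by rewrite splitL -/(vA _ _) coefA.
by rewrite splitR coefB.
Qed.

End Basics.

Section Tangent.
Variable C : numClosedFieldType.
Variable n : nat.
Variable a : {poly C}.
Hypothesis ha : size a = n.+1.
Hypothesis ia : int01 a = 0.
Local Notation x := (coords n a 0).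

Definition TA (w : 'rV[C]_(ambdim n)) :=
  IA w = 0 /\ exists c, forall k, vB w k = c * a`_k.

Lemma tangent_of_TA w : TA w -> zariski_tangent (@inU C n) x w.
Proof.
move=> [hI [c hc]] f hf.
pose u : 'rV[C]_(ambdim n) :=
  \row_j match split j with inl _ => 0 | inr k => c * vA w k end.
change (Ed (fun i => x 0 i) (fun i => w 0 i) f = 0).
rewrite -(Dd_Ed _ _ (fun i => u 0 i)) /Dd.
suff -> : Phi (fun i => x 0 i) (fun i => w 0 i) (fun i => u 0 i) f = 0 by rewrite coef0.
apply: poly_all0 => t; rewrite Phi_horner.
pose vt := x + t *: w + t ^+ 2 *: u.
have -> : f.@[fun i => x 0 i + w 0 i * t + u 0 i * t ^+ 2] = evalpt f vt.
  by apply: meval_eq => i; rewrite /vt !mxE (mulrC t) (mulrC (t ^+ 2)).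
apply: hf.
have hvA k : vA vt k = a`_k + t * vA w k.
  by rewrite /vA !mxE !splitL /= mulr0 addr0.
have hvB k : vB vt k = (c * t) * vA vt k.
  by rewrite hvA /vB !mxE !splitR /= coef0 add0r -/(vB w k) hc; ring.
have hIA : IA vt = 0.
  rewrite /IA; under eq_bigr => k _ do rewrite hvA mulrDl -mulrA.
  rewrite big_split /= -mulr_sumr -/(IA w) hI mulr0 addr0.
  by have := ia; rewrite (@int01E C a n.+1) ?ha.
split.
- by rewrite int01A.
- rewrite int01B /IB; under eq_bigr => k _ do rewrite hvB -[c * t * _ / _]mulrA.
  by rewrite -mulr_sumr -/(IA vt) hIA mulr0.
- exists (c * t), (-1); split; first by right; rewrite oppr_eq0 oner_eq0.
  by rewrite (polyB_scale hvB) scaleN1r subrr.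
Qed.

Lemma a_lead : a`_n != 0.
Proof.
have -> : a`_n = lead_coef a by rewrite lead_coefE ha.
by rewrite lead_coef_eq0 -size_poly_eq0 ha.
Qed.

Lemma TA_of_tangent w : zariski_tangent (@inU C n) x w -> TA w.
Proof.
move=> H; split.
  pose f1 : {mpoly C[ambdim n]} :=
    \sum_(k < n.+1) ((k.+1)%:R^-1) *: 'X_(lshift n.+1 k).
  have ev v : evalpt f1 v = IA v.
    rewrite /evalpt /f1 (big_morph _ (mevalD _) (meval0 _)) /IA; apply: eq_bigr => k _.
    by rewrite mevalZ mevalXU mulrC.
  have := H f1; rewrite -/(Ed (fun i => x 0 i) (fun i => w 0 i) f1).
  move=> <-; last by move=> v [h1 _ _]; rewrite ev -int01A.
  rewrite /f1 (big_morph _ (EdD _ _) (Ed0 _ _)); apply: eq_bigr => k _.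
  by rewrite EdZ EdX mulrC.
have key (j k : 'I_n.+1) : a`_j * vB w k = a`_k * vB w j.
  pose g : {mpoly C[ambdim n]} := 'X_(lshift n.+1 j) * 'X_(rshift n.+1 k)
     - 'X_(lshift n.+1 k) * 'X_(rshift n.+1 j).
  have ev v : evalpt g v = vA v j * vB v k - vA v k * vB v j.
    by rewrite /evalpt /g mevalB !mevalM !mevalXU.
  have := H g; rewrite -/(Ed (fun i => x 0 i) (fun i => w 0 i) g).
  rewrite /g EdB !EdM !EdX !mevalXU -/(vB x k) -/(vB x j) -/(vA x j) -/(vA x k).
  rewrite !coordsA !coordsB !coef0 !mulr0 !add0r => h.
  apply/eqP; rewrite -subr_eq0; apply/eqP; rewrite -[RHS](h _).
    by rewrite /vB.
  move=> v [_ _ [l [m [nz E]]]]; rewrite ev.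
  have Ei i : l * vA v i + m * vB v i = 0.
    by have := congr1 (fun P : {poly C} => P`_i) E; rewrite coefD !coefZ coefA coefB coef0.
  case: nz => nz.
    apply: (mulfI nz); rewrite mulr0; transitivity (vB v k * (l * vA v j + m * vB v j) - vB v j * (l * vA v k + m * vB v k)); first by ring.
    by rewrite !Ei !mulr0 subr0.
  apply: (mulfI nz); rewrite mulr0; transitivity (vA v j * (l * vA v k + m * vB v k) - vA v k * (l * vA v j + m * vB v j)); first by ring.
  by rewrite !Ei !mulr0 subr0.
exists (vB w ord_max / a`_n) => k.
have := key ord_max k; rewrite /= => h.
apply: (mulfI a_lead); rewrite h; field.
exact: a_lead.
Qed.


Definition Bm : 'M[C]_(n.+1, ambdim n) := \matrix_(i, j) match split j with
  | inl k => if (i < n)%N then (k == i.+1 :> nat)%:R - (k == 0%N :> nat)%:R / (i.+2)%:R else 0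
  | inr k => if (i == n :> nat) then a`_k else 0 end.

Local Notation wi i := (widen_ord (leqnSn n) i).

Lemma EB v k : vB (v *m Bm) k = v 0 ord_max * a`_k.
Proof.
rewrite /vB mxE big_ord_recr /= big1 ?add0r.
  by rewrite mxE splitR /= eqxx.
by move=> i _; rewrite mxE splitR /= (ltn_eqF (ltn_ord i)) mulr0.
Qed.

Lemma EA0 v : vA (v *m Bm) ord0 = - \sum_(i < n) v 0 (wi i) / (i.+2)%:R.
Proof.
rewrite /vA mxE big_ord_recr /= mxE splitL /= ltnn mulr0 addr0 -sumrN.
apply: eq_bigr => i _; rewrite mxE splitL /= ltn_ord /=.
by rewrite sub0r mul1r mulrN.
Qed.

Lemma EAS v (i : 'I_n) : vA (v *m Bm) (lift ord0 i) = v 0 (wi i).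
Proof.
rewrite /vA mxE big_ord_recr /= mxE splitL /= ltnn mulr0 addr0.
rewrite (bigD1 i) //= big1 ?addr0.
  rewrite mxE splitL /= ltn_ord (_ : bump 0 i = i.+1) //.
  by rewrite eqxx /= mul0r subr0 mulr1.
move=> i' hi'; rewrite mxE splitL /= ltn_ord (_ : bump 0 i = i.+1) // /= mul0r subr0.
by rewrite eqSS (_ : (i == i' :> nat) = false) ?mulr0 //; apply/negbTE; rewrite eq_sym.
Qed.

Lemma Bm_free : row_free Bm.
Proof.
rewrite -kermx_eq0; apply/rowV0P => v /sub_kermxP hv.
apply/rowP => i; rewrite mxE.
case: (unliftP ord_max i) => [i' ->|->].
  have := EAS v i'; rewrite /vA hv mxE => ->; congr (v 0 _); apply: val_inj.
  exact: lift_max.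
have := EB v ord_max; rewrite /vB hv mxE => /esym/eqP.
by rewrite mulf_eq0 (negbTE a_lead) orbF => /eqP.
Qed.

Lemma sub_Bm w : (w <= Bm)%MS <-> TA w.
Proof.
split.
  move/submxP => [v ->]; split; last by exists (v 0 ord_max) => k; exact: EB.
  rewrite /IA big_ord_recl EA0.
  rewrite [X in _ + X](eq_bigr (fun i : 'I_n => v 0 (wi i) / (i.+2)%:R)).
    by rewrite (_ : (nat_of_ord (@ord0 n)).+1%:R = 1 :> C) ?divr1 // addNr.
  by move=> i _; congr (_ / _); exact: EAS.
move=> [hI [c hc]]; apply/submxP.
exists (\row_(i < n.+1) if (i < n)%N then vA w (inord i.+1) else c).
apply/rowP => j; rewrite -(splitK j); case: (split j) => k /=.
  change (vA w k = vA (\row_(i < n.+1) (if (i < n)%N then vA w (inord i.+1) else c) *m Bm) k).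
  case: (unliftP ord0 k) => [i ->|->].
    rewrite EAS mxE /= ltn_ord; congr (vA w _); apply: val_inj.
    by change (i.+1 = nat_of_ord (@inord n i.+1)); rewrite inordK ?ltnS ?ltn_ord.
  rewrite EA0; move: hI; rewrite /IA big_ord_recl.
  rewrite (_ : (nat_of_ord (@ord0 n)).+1%:R = 1 :> C) ?divr1 // => /eqP; rewrite addr_eq0 => /eqP ->.
  congr (- _); apply: eq_bigr => i _; rewrite mxE /= ltn_ord; congr (vA w _ / _).
  by apply: val_inj; change (i.+1 = nat_of_ord (@inord n i.+1)); rewrite inordK ?ltnS ?ltn_ord.
change (vB w k = vB (\row_(i < n.+1) (if (i < n)%N then vA w (inord i.+1) else c) *m Bm) k).
by rewrite EB mxE /= ltnn hc.
Qed.

End Tangent.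

Theorem mainTheorem2 (C : numClosedFieldType) (n : nat) (a : {poly C}) :
  size a = n.+1 -> int01 a = 0 ->
  inU (coords n a 0) /\
  (forall p q : {poly C}, (size p <= n.+1)%N -> (size q <= n.+1)%N ->
     (zariski_tangent (@inU C n) (coords n a 0) (coords n p q) <->
      ((exists c : C, q = c *: a) /\ int01 p = 0))) /\
  (exists B : 'M[C]_(n.+1, ambdim n),
     \rank B = n.+1 /\
     forall w : 'rV[C]_(ambdim n),
       zariski_tangent (@inU C n) (coords n a 0) w <-> (w <= B)%MS).
Proof.
move=> ha ia.
have hT w : zariski_tangent (@inU C n) (coords n a 0) w <-> TA a w.
  by split; [exact: TA_of_tangent | exact: tangent_of_TA].
split.
  have haa : (size a <= n.+1)%N by rewrite ha.
  split.
  - by rewrite polyA_coords.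
  - by rewrite polyB_coords ?size_poly0 // int01_0.
  - exists 0, 1; split; first by right; rewrite oner_eq0.
    by rewrite polyA_coords // polyB_coords ?size_poly0 // scale0r scale1r addr0.
split.
  move=> p q hp hq; rewrite hT /TA -int01A polyA_coords //.
  split.
    move=> [h [c hc]]; split => //; exists c.
    apply/polyP => j; rewrite coefZ; case: (ltnP j n.+1) => hj.
      by have := hc (Ordinal hj); rewrite coordsB.
    by rewrite !nth_default ?mulr0 ?ha // (leq_trans hq hj).
  by move=> [[c hc] h]; split => //; exists c => k; rewrite coordsB hc coefZ.
exists (@Bm C n a); split; first exact/eqP/(Bm_free ha).
by move=> w; rewrite hT sub_Bm.
Qed.
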